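(* An inverse semigroup $S$ is $E$-unitary if and only if there exist a topological space $X$ and a topologically principal topological partial action $\theta=(\{X_s\}_{s\in S},\{\theta_s\}_{s\in S})$ of $S$ on $X$ such that (i) $\theta$ factors through $\mathbf{G}(S)$, i.e. there is a partial action $\widetilde\theta=(\{X_{[s]}\}_{[s]\in\mathbf{G}(S)},\{\widetilde\theta_{[s]}\}_{[s]\in\mathbf{G}(S)})$ of $\mathbf{G}(S)$ on $X$ with $\widetilde\theta_{[s]}(x)=\theta_s(x)$ for all $s\in S$ and $x\in X_{s^*}$; and (ii) $E(S)=\{s\in S:\theta_s\text{ is an idempotent of }\mathcal{I}(X)\}$.
   Context: Inverse semigroups: $E(S)$ idempotents; $s\le t$ iff $s=ts^*s$. $S$ is $E$-unitary if $e\le s$ with $e\in E(S)$ implies $s\in E(S)$. $\mathbf{G}(S)$ is the maximal group image: the quotient of $S$ by the congruence $s\sim t$ iff there is $u\in S$ with $u\le s$ and $u\le t$; $[s]$ denotes the class of $s$. $\mathcal{I}(X)$ is the inverse semigroup of partial bijections of $X$; its idempotents are identity maps of subsets. A topological partial action of $S$ (or of a group, viewed as an inverse semigroup) on $X$: open $X_s$, homeomorphisms $\theta_s:X_{s^*}\to X_s$ such that $s\mapsto\theta_s$ is a partial homomorphism into $\mathcal{I}(X)$ ($\theta_{s^*}=\theta_s^{-1}$, $\theta_s\theta_t\le\theta_{st}$, $s\le t\Rightarrow\theta_s\le\theta_t$) and $X=\bigcup_{e\in E(S)}X_e$. With $S_x=\{s:x\in X_{s^*}\}$, let $\Lambda(\theta)$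 be the set of $x\in X$ such that every $s\in S_x$ with $\theta_s(x)=x$ admits $e\in E(S)\cap S_x$ with $e\le s$; $\theta$ is topologically principal if $\Lambda(\theta)$ is dense in $X$. *)

(* Defs.v *)
From HB Require Import structures.
From mathcomp Require Import all_boot all_order.
From mathcomp Require Import all_classical all_reals all_analysis.
Set Implicit Arguments. Unset Strict Implicit. Unset Printing Implicit Defensive.
Local Open Scope classical_set_scope.

(* An inverse semigroup: a semigroup with an involution-like operation s^* such
   that s s^* s = s, s^* s s^* = s^*, and idempotents commute (this is the
   standard equivalent of "every element has a unique inverse", with s^* that
   unique inverse). *)
Record invSemigroup := InvSemigroup {
  isg_car :> Type;
  isg_mul : isg_car -> isg_car -> isg_car;
  isg_star : isg_car -> isg_car;
  isg_mulA : forall a b c, isg_mul a (isg_mul b c) = isg_mul (isg_mul a b) c;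
  isg_regular : forall s, isg_mul (isg_mul s (isg_star s)) s = s;
  isg_regular_star : forall s,
      isg_mul (isg_mul (isg_star s) s) (isg_star s) = isg_star s;
  isg_idem_comm : forall e f, isg_mul e e = e -> isg_mul f f = f ->
      isg_mul e f = isg_mul f e
}.

Section InverseSemigroups.
Variable S : invSemigroup.
Local Notation "a * b" := (isg_mul a b).
Local Notation "s ^*" := (isg_star s).

Definition idem (e : S) : Prop := e * e = e.

Definition nleq (s t : S) : Prop := s = t * (s^* * s).

Definition E_unitary : Prop :=
  forall e s : S, idem e -> nleq e s -> idem s.

(* the minimum group congruence: s ~ t iff some u is below both;
   G(S) = S/~ and [s] is the ~-class of s *)
Definition sigma (s t : S) : Prop := exists u, nleq u s /\ nleq u t.

(* A topological partial action of S on X: X_s = D s, theta_s = th s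
   (a total function whose values are only relevant on X_{s^*}). *)
Definition top_partial_action (X : topologicalType)
    (D : S -> set X) (th : S -> X -> X) : Prop :=
  (forall s, open (D s)) /\
  (* theta_s : X_{s^*} -> X_s with theta_{s^*} = theta_s^{-1}; together with the
     same statement for s^* this makes theta_s a bijection X_{s^*} -> X_s *)
  (forall s x, D (s^*) x -> D s (th s x) /\ th (s^*) (th s x) = x) /\
  (* theta_s continuous on X_{s^*} (hence homeomorphism, applying it to s^* ) *)
  (forall s, {within D (s^*), continuous (th s)}) /\
  (* theta_s theta_t <= theta_{st} in I(X) *)
  (forall s t x, D (t^*) x -> D (s^*) (th t x) ->
      D ((s * t)^*) x /\ th (s * t) x = th s (th t x)) /\
  (* s <= t implies theta_s <= theta_t in I(X) *)
  (forall s t, nleq s t ->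
      (forall x, D (s^*) x -> D (t^*) x /\ th s x = th t x)) /\
  (forall x, exists e, idem e /\ D e x).

Definition Lambda (X : topologicalType) (D : S -> set X) (th : S -> X -> X)
  : set X :=
  [set x | forall s, D (s^*) x -> th s x = x ->
             exists e, idem e /\ D (e^*) x /\ nleq e s].

Definition top_principal (X : topologicalType) (D : S -> set X)
    (th : S -> X -> X) : Prop := dense (Lambda D th).

(* It is given as a
   family indexed by representatives s in S of the classes [s], required to be
   well defined on classes: X_{[s]} = Y s, widetilde-theta_{[s]} = ph s.
   Group operations of G(S): [s][t] = [st], [s]^{-1} = [s^*]; the natural order
   of a group is equality, and its idempotents are the [s] with [s][s] = [s]. *)
Definition GS_top_partial_action (X : topologicalType)
    (Y : S -> set X) (ph : S -> X -> X) : Prop :=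
  (forall s t, sigma s t ->
      Y s = Y t /\ (forall x, Y (s^*) x -> ph s x = ph t x)) /\
  (forall s, open (Y s)) /\
  (forall s x, Y (s^*) x -> Y s (ph s x) /\ ph (s^*) (ph s x) = x) /\
  (forall s, {within Y (s^*), continuous (ph s)}) /\
  (forall s t x, Y (t^*) x -> Y (s^*) (ph t x) ->
      Y ((s * t)^*) x /\ ph (s * t) x = ph s (ph t x)) /\
  (* [s] <= [t] (i.e. [s] = [t]) implies ph_[s] <= ph_[t] *)
  (forall s t, sigma s t ->
      (forall x, Y (s^*) x -> Y (t^*) x /\ ph s x = ph t x)) /\
  (* X = union of X_g over idempotents g = [s] of G(S) *)
  (forall x, exists s, sigma (s * s) s /\ Y s x).

(* theta_s is an idempotent of I(X): theta_s o theta_s = theta_s as partial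
   bijections (same domain, same values). *)
Definition I_idem (X : topologicalType) (D : S -> set X) (th : S -> X -> X)
    (s : S) : Prop :=
  (forall x, D (s^*) x <-> (D (s^*) x /\ D (s^*) (th s x))) /\
  (forall x, D (s^*) x -> th s (th s x) = th s x).

End InverseSemigroups.

(* Main.v *)
Require Import Defs.
From mathcomp Require Import all_boot all_order.
From mathcomp Require Import all_classical all_reals all_analysis.
Local Open Scope classical_set_scope.

Section Alg.
Variable S : invSemigroup.
Local Notation "a * b" := (isg_mul a b).
Local Notation "s ^*" := (isg_star s).
Implicit Types a b c e f s t u v x : S.

Lemma mA a b c : a * (b * c) = a * b * c. Proof. exact: isg_mulA. Qed.
Lemma reg s : s * s^* * s = s. Proof. exact: isg_regular. Qed.
Lemma regR s : s * (s^* * s) = s. Proof. by rewrite mA reg. Qed.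
Lemma regs s : s^* * s * s^* = s^*. Proof. exact: isg_regular_star. Qed.
Lemma regsR s : s^* * (s * s^*) = s^*. Proof. by rewrite mA regs. Qed.
Lemma comm e f : idem e -> idem f -> e * f = f * e.
Proof. exact: isg_idem_comm. Qed.
Arguments comm {e f}.
Lemma idem_ss s : idem (s^* * s). Proof. by rewrite /idem mA regs. Qed.
Lemma idem_sS s : idem (s * s^*). Proof. by rewrite /idem mA reg. Qed.

Lemma uniq_inv a x : a * x * a = a -> x * a * x = x -> x = a^*.
Proof.
move=> h1 h2.
have ix : idem (x * a) by rewrite /idem mA h2.
have iax : idem (a * x) by rewrite /idem mA h1.
have E1 : x = a^* * a * x.
  transitivity (x * a * x); first by rewrite h2.
  transitivity (x * a * (a^* * a) * x); first by rewrite -(mA x a (a^* * a)) regR.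
  by rewrite (comm ix (idem_ss a)) -!mA [x * (a * x)]mA h2.
have E2 : a^* = a^* * a * x.
  transitivity (a^* * a * a^*); first by rewrite regs.
  transitivity (a^* * (a * x * a) * a^*); first by rewrite h1 regs.
  transitivity (a^* * ((a * x) * (a * a^*))); first by rewrite -!mA.
  by rewrite (comm iax (idem_sS a)) !mA regs.
by rewrite E1 -E2.
Qed.

Lemma star_star s : s^*^* = s.
Proof. by symmetry; apply: uniq_inv; [exact: regs | exact: reg]. Qed.

Lemma idem_star e : idem e -> e^* = e.
Proof. by move=> he; symmetry; apply: uniq_inv; rewrite ?he. Qed.
Arguments idem_star {e}.

Lemma star_mul s t : (s * t)^* = t^* * s^*.
Proof.
symmetry; apply: uniq_inv.
  transitivity (s * ((t * t^*) * (s^* * s)) * t); first by rewrite -!mA.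
  by rewrite -(comm (idem_ss s) (idem_sS t)) !mA reg -!mA regR.
transitivity (t^* * ((s^* * s) * (t * t^*)) * s^*); first by rewrite -!mA.
by rewrite (comm (idem_ss s) (idem_sS t)) !mA regs -!mA regsR.
Qed.

Lemma idem_mul e f : idem e -> idem f -> idem (e * f).
Proof.
move=> he hf; rewrite /idem.
transitivity (e * (f * e) * f); first by rewrite !mA.
by rewrite -(comm he hf) !mA he -mA hf.
Qed.
Arguments idem_mul {e f}.

Lemma nleq_refl u : nleq u u.
Proof. by rewrite /nleq regR. Qed.

Lemma nleq_star u s : nleq u s -> nleq u^* s^*.
Proof.
rewrite /nleq => h.
have hs : u^* = u^* * u * s^*.
  by rewrite {1}h star_mul (idem_star (idem_ss u)).
have e1 : s^* * (u * u^*) = s^* * s * u^*.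
  by rewrite {1}h -!mA regsR.
have e2 : s^* * s * u^* = u^*.
  rewrite {1}hs mA (comm (idem_ss s) (idem_ss u)) -mA regs.
  by rewrite -hs.
by rewrite star_star e1 e2.
Qed.

Lemma nleq_mul_idem a f : idem f -> nleq (a * f) a.
Proof.
move=> hf; rewrite /nleq star_mul (idem_star hf); symmetry.
transitivity (a * (f * (a^* * a)) * f); first by rewrite -!mA.
by rewrite (comm hf (idem_ss a)) !mA reg -mA hf.
Qed.

Lemma nleq_trans z u s : nleq z u -> nleq u s -> nleq z s.
Proof.
rewrite /nleq => hz hu.
have hzs : z^* = z^* * z * u^*.
  by rewrite {1}hz star_mul (idem_star (idem_ss z)).
have E : z^* * z = z^* * z * (u^* * u) * (z^* * z).
  transitivity ((z^* * z * u^*) * (u * (z^* * z))); first by rewrite -hzs -hz.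
  by rewrite -!mA.
have k : u^* * u * (z^* * z) = z^* * z.
  symmetry; rewrite {1}E (comm (idem_ss z) (idem_ss u)) -mA.
  by rewrite (idem_ss z).
by rewrite {1}hz {1}hu -mA k.
Qed.


Arguments nleq_trans {z u s}.
Arguments nleq_star {u s}.
Arguments nleq_mul_idem a {f}.

Lemma sigma_refl s : sigma s s.
Proof. by exists s; split; apply: nleq_refl. Qed.

Lemma sigma_sym s t : sigma s t -> sigma t s.
Proof. by case=> u [h1 h2]; exists u. Qed.

Lemma sigma_trans s t w : sigma s t -> sigma t w -> sigma s w.
Proof.
case=> u [hus hut]; case=> v [hvt hvw].
have ez : u * (v^* * v) = v * (u^* * u).
  transitivity (t * (u^* * u) * (v^* * v)); first by rewrite -hut.
  transitivity (t * (v^* * v) * (u^* * u)); first by rewrite -mA (comm (idem_ss u) (idem_ss v)) mA.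
  by rewrite -hvt.
exists (u * (v^* * v)); split.
  exact: nleq_trans (nleq_mul_idem _ (idem_ss v)) hus.
rewrite ez; exact: nleq_trans (nleq_mul_idem _ (idem_ss u)) hvw.
Qed.

Lemma sigma_star s t : sigma s t -> sigma s^* t^*.
Proof. by case=> u [h1 h2]; exists u^*; split; apply: nleq_star. Qed.
Arguments sigma_star {s t}.
Arguments sigma_trans {s t w}.
Arguments sigma_sym {s t}.

Lemma compat t1 t2 x : E_unitary S -> sigma t1 t2 ->
  t1^* * t1 * x = x -> t2^* * t2 * x = x -> t1 * x = t2 * x.
Proof.
move=> HE [u [h1 h2]] h1x h2x.
have le : nleq (u * u^*) (t1 * t2^*).
  rewrite /nleq (idem_star (idem_sS u)) (idem_sS u).
  have a1 : t2^* * (u * u^*) = u^*.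
    by have := nleq_star h2; rewrite /nleq star_star => <-.
  have a2 : u * u^* = t1 * u^*.
    by rewrite {1}h1 -mA regs.
  by rewrite -mA a1 -a2.
have ig : idem (t1 * t2^*) := HE _ _ (idem_sS u) le.
have gs : t2 * t1^* = t1 * t2^*.
  by rewrite -{1}(idem_star ig) star_mul star_star.
have e1 : t1 * x = t1 * t2^* * (t2 * x).
  by rewrite -{1}h2x !mA.
have e2 : t2 * x = t1 * t2^* * (t1 * x).
  by rewrite -{1}h1x !mA gs.
by rewrite {1}e1 {1}e2 mA ig -e2.
Qed.

Lemma idem_conj t e : idem e -> idem (t^* * e * t).
Proof.
move=> he; rewrite /idem.
transitivity (t^* * (e * (t * t^*)) * e * t); first by rewrite !mA.
by rewrite (comm he (idem_sS t)) !mA regs -(mA t^* e e) he.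
Qed.
Arguments idem_conj t {e}.

Lemma aux_mul s t e g v1 v2 : idem e -> idem g -> v1 = g * t^* -> v2 = t * g ->
  s * e * (t * g) = s * t * (v1 * e * v2).
Proof.
move=> ie ig -> ->; symmetry.
transitivity (s * (t * (g * (t^* * e * t)) * g)); first by rewrite -!mA.
rewrite (comm ig (idem_conj t ie)).
transitivity (s * (t * t^* * e) * (t * (g * g))); first by rewrite -!mA.
rewrite ig (comm (idem_sS t) ie) -!mA; congr (s * (e * _)).
by rewrite !mA reg.
Qed.

Lemma nleq_mul u s v t : nleq u s -> nleq v t -> nleq (u * v) (s * t).
Proof.
rewrite /nleq => hu hv.
have hvs : v^* = v^* * v * t^*.
  by rewrite {1}hv star_mul (idem_star (idem_ss v)).
rewrite star_mul.
transitivity (s * (u^* * u) * (t * (v^* * v))); first by rewrite -hu -hv.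
have -> : v^* * u^* * (u * v) = v^* * (u^* * u) * v by rewrite !mA.
exact: aux_mul (idem_ss u) (idem_ss v) hvs hv.
Qed.

Lemma sigma_mul s s' t t' : sigma s s' -> sigma t t' -> sigma (s * t) (s' * t').
Proof.
case=> u [h1 h2]; case=> v [h3 h4]; exists (u * v); split; exact: nleq_mul.
Qed.

Arguments sigma_mul {s s' t t'}.
Arguments nleq_mul {u s v t}.

Lemma nleq_dom z u : nleq z u -> u^* * u * (z^* * z) = z^* * z.
Proof.
rewrite /nleq => hz.
have hzs : z^* = z^* * z * u^*.
  by rewrite {1}hz star_mul (idem_star (idem_ss z)).
have E : z^* * z = z^* * z * (u^* * u) * (z^* * z).
  transitivity ((z^* * z * u^*) * (u * (z^* * z))); first by rewrite -hzs -hz.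
  by rewrite -!mA.
symmetry; rewrite {1}E (comm (idem_ss z) (idem_ss u)) -mA.
by rewrite (idem_ss z).
Qed.

Lemma rev_dir (X : topologicalType) (D : S -> set X) (th : S -> X -> X)
  (Y : S -> set X) (ph : S -> X -> X) :
  GS_top_partial_action Y ph ->
  (forall s (p : X), D s^* p -> Y s^* p /\ ph s p = th s p) ->
  (forall s, idem s <-> I_idem D th s) -> E_unitary S.
Proof.
move=> [Hwd [_ [Hinv [_ [Hcomp _]]]]] Hfac Hii e s he hes.
apply/Hii.
have sse : sigma s e by exists e; split => //; exact: nleq_refl.
have ses := sigma_star sse.
have he' : e * e = e := he.
have ee : e^* = e := idem_star he.
have fx : forall p : X, D s^* p -> th s p = p.
  move=> x Dx; case: (Hfac s x Dx) => Ys <-.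
  rewrite ((Hwd _ _ sse).2 x Ys).
  have Ye : Y e^* x by rewrite -(Hwd _ _ ses).1.
  have [Yex inv] := Hinv e x Ye.
  have Ye2 : Y e^* (ph e x) by rewrite ee.
  have [_ c] := Hcomp e e x Ye Ye2.
  have [_ inv2] := Hinv e (ph e x) Ye2.
  by rewrite he' in c; rewrite -c inv in inv2.
split => x.
  split => [Dx|[]//]; split => //; by rewrite fx.
by move=> Dx; rewrite !fx.
Qed.
Arguments nleq_dom {z u}.

Definition Xt : topologicalType := discrete_topology {classic S}.

Lemma dcont (A : set Xt) (f : Xt -> Xt) : {within A, continuous f}.
Proof.
apply: continuous_subspaceT => x B /= /nbhs_singleton Bfx.
rewrite /= nbhs_principalE; exact/principal_filterP.
Qed.

Lemma dopen (A : set Xt) : open A.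
Proof. exact: discrete_open. Qed.

Definition Dd (s : S) : set Xt := [set p : Xt | s * s^* * p = p].
Definition thh (s : S) (p : Xt) : Xt := s * p.
Definition Dom (s : S) : set Xt := [set p : Xt | exists t, sigma t s /\ t^* * t * p = p].
Definition Yy (s : S) : set Xt := Dom s^*.
Definition phh (s : S) (p : Xt) : Xt :=
  match pselect (exists t, sigma t s /\ t^* * t * p = p) with
  | left H => proj1_sig (cid H) * p
  | right _ => p
  end.

Lemma ph_spec (HE : E_unitary S) s t (p : Xt) : sigma t s -> t^* * t * p = p ->
  phh s p = t * p.
Proof.
move=> st hp; rewrite /phh; case: pselect => [H|H]; last first.
  by exfalso; apply: H; exists t.
case: (cid H) => t' [st' hp'] /=.
by apply: compat HE (sigma_trans st' (sigma_sym st)) hp' hp.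
Qed.
Arguments ph_spec HE {s t p}.

Lemma fwd_tpa : top_partial_action Dd thh.
Proof.
split; first by move=> s; exact: dopen.
split.
  move=> s x; rewrite /Dd /thh /= star_star => hx; split; first by rewrite mA reg.
  by rewrite mA.
split; first by move=> s; exact: dcont.
split.
  move=> s t x; rewrite /Dd /thh /= !star_star => ht hs; split; last by rewrite mA.
  rewrite star_mul.
  transitivity (t^* * (s^* * s * (t * x))); first by rewrite !mA.
  by rewrite hs mA ht.
split.
  move=> s t hst x; rewrite /Dd /thh /= !star_star => hx; split.
    by rewrite -{1}hx mA (nleq_dom hst) hx.
  by rewrite {1}hst -mA hx.
move=> x; exists (x * x^*); split; first exact: idem_sS.
by rewrite /Dd /= (idem_star (idem_sS x)) (idem_sS x) reg.
Qed.

Lemma fwd_tp : top_principal Dd thh.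
Proof.
move=> O [y Oy] _; exists y; split => //.
rewrite /Lambda /= => s; rewrite /Dd /thh /= star_star => hx hsx.
exists (y * y^*); split; first exact: idem_sS.
split.
  by rewrite star_star (idem_star (idem_sS y)) (idem_sS y) reg.
by rewrite /nleq (idem_star (idem_sS y)) (idem_sS y) mA hsx.
Qed.

Lemma fwd_ii s : idem s <-> I_idem Dd thh s.
Proof.
split.
  move=> hs; have ss : s^* = s := idem_star hs.
  have hs' : s * s = s := hs.
  rewrite /I_idem /Dd /thh /= star_star ss hs'.
  split => x; last by move=> h; rewrite !h.
  by split => [h|[]//]; split => //; rewrite !h.
case=> _ h2; have := h2 (s^* * s).
rewrite /Dd /thh /= star_star (idem_ss s) regR => h.
by apply: h.
Qed.

Lemma fwd_gs (HE : E_unitary S) : GS_top_partial_action Yy phh.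
Proof.
split.
  move=> s t st; split.
    rewrite /Yy /Dom; apply: funext => x; apply: propext.
    split => -[w [hw1 hw2]]; exists w; split => //.
      exact: sigma_trans hw1 (sigma_star st).
    exact: sigma_trans hw1 (sigma_sym (sigma_star st)).
  move=> x; rewrite /Yy /Dom star_star => -[w [hw hwx]].
  by rewrite (ph_spec HE hw hwx) (ph_spec HE (sigma_trans hw st) hwx).
split; first by move=> s; exact: dopen.
split.
  move=> s x; rewrite /Yy /Dom star_star => -[w [hw hwx]].
  rewrite (ph_spec HE hw hwx).
  have h2 : w^*^* * w^* * (w * x) = w * x by rewrite star_star mA reg.
  split; first by exists w^*; split => //; exact: sigma_star.
  by rewrite (ph_spec HE (sigma_star hw) h2) mA.
split; first by move=> s; exact: dcont.
split.
  move=> s t x; rewrite /Yy /Dom !star_star => -[t' [ht' ht'x]].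
  rewrite (ph_spec HE ht' ht'x) => -[s' [hs' hs'x]].
  have h : (s' * t')^* * (s' * t') * x = x.
    rewrite star_mul.
    transitivity (t'^* * (s'^* * s' * (t' * x))); first by rewrite !mA.
    by rewrite hs'x mA ht'x.
  split; first by exists (s' * t'); split => //; exact: sigma_mul.
  by rewrite (ph_spec HE hs' hs'x) (ph_spec HE (sigma_mul hs' ht') h) mA.
split.
  move=> s t st x; rewrite /Yy /Dom !star_star => -[w [hw hwx]]; split.
    by exists w; split => //; exact: sigma_trans hw st.
  by rewrite (ph_spec HE hw hwx) (ph_spec HE (sigma_trans hw st) hwx).
move=> x; exists (x * x^*); split.
  by rewrite (idem_sS x); exact: sigma_refl.
exists (x * x^*)^*; split; first exact: sigma_refl.
by rewrite star_star (idem_star (idem_sS x)) (idem_sS x) reg.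
Qed.

Lemma fwd_fac (HE : E_unitary S) s (p : Xt) :
  Dd s^* p -> Yy s^* p /\ phh s p = thh s p.
Proof.
rewrite /Dd /Yy /Dom /= !star_star => hx; split.
  by exists s; split => //; exact: sigma_refl.
by rewrite (ph_spec HE (sigma_refl s) hx).
Qed.

End Alg.

Theorem theorem7p13 (S : invSemigroup) :
  E_unitary S <->
  exists (X : topologicalType) (D : S -> set X) (th : S -> X -> X),
    top_partial_action D th /\ top_principal D th /\
    (exists (Y : S -> set X) (ph : S -> X -> X),
        GS_top_partial_action Y ph /\
        (forall s x, D (isg_star s) x -> Y (isg_star s) x /\ ph s x = th s x)) /\
    (forall s : S, idem s <-> I_idem D th s).
Proof.
split.
  move=> HE; exists (Xt S), (@Dd S), (@thh S).
  split; first exact: fwd_tpa.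
  split; first exact: fwd_tp.
  split; last exact: fwd_ii.
  exists (@Yy S), (@phh S); split; first exact: fwd_gs.
  exact: fwd_fac.
case=> X [D [th [_ [_ [[Y [ph [HG Hf]]] Hii]]]]].
exact: rev_dir HG Hf Hii.
Qed.
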